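(* Let $p,q$ be integers with $2\le q<p$ and $q\mid p$, and let $s=\frac{\log q}{\log p}$. For every regular mapping $\tau:\Sigma_q^\ast\to\{-1,0,\ldots,p-2\}$, the associated set $\Lambda(\tau)$ (a regular maximal orthogonal set of $\mu_{p,q}$) satisfies \[ D_s^+(\Lambda(\tau))\le \frac{1}{\left(\frac{q-1}{2(p-1)}\right)^{s}}=\left(\frac{2(p-1)}{q-1}\right)^{s}. \] Moreover, the bound is attained by the canonical set \[ \Lambda_{p,q}=\Big\{\sum_{i=1}^{k}a_i p^{i-1}: a_i\in\{0,1,\ldots,q-1\},\ k\ge 1\Big\}, \] i.e. $D_s^+(\Lambda_{p,q})=\left(\frac{2(p-1)}{q-1}\right)^{s}$.
   Context: $\mu_{p,q}$ denotes the self-similar probability measure on $\mathbb R$ satisfying $\mu=\frac1q\sum_{d\in\mathcal D}\mu\circ f_d^{-1}$ with $f_d(x)=p^{-1}(x+d)$ and $\mathcal D=\frac pq\{0,1,\ldots,q-1\}$. Upper $r$-Beurling density: for a countable $\Lambda\subseteq\mathbb R$ and $r>0$, $D_r^+(\Lambda)=\limsup_{h\to\infty}\sup_{x\in\mathbb R}\frac{\#(\Lambda\cap B(x,h))}{h^r}$, where $B(x,h)=(x-h,x+h)$. Let $\Sigma_q=\{0,1,\ldots,q-1\}$, $\Sigma_q^n$ the words of length $n$, and $\Sigma_q^\ast=\bigcup_{n\ge1}\Sigma_q^n$. A map $\tau:\Sigma_q^\ast\to\{-1,0,\ldots,p-2\}$ is a regular mapping if (i) $\tau(0^n)=0$ for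 all $n\ge1$; (ii) $\tau(i_1\cdots i_n)\in i_n+q\mathbb Z$ for every word $i_1\cdots i_n$; (iii) for every $I\in\Sigma_q^\ast$, $\tau(I0^l)=0$ for all sufficiently large $l$. For $I=i_1\cdots i_n\in\Sigma_q^\ast$ and $k\ge1$, let $I_{1,k}=i_1\cdots i_k$ if $k\le n$ and $I_{1,k}=i_1\cdots i_n0^{k-n}$ if $k>n$, and set $\tau^\ast(I)=\sum_{k=1}^\infty \tau(I_{1,k})p^{k-1}$ (a finite sum by (iii)). Then $\Lambda(\tau)=\{\tau^\ast(I): I\in\Sigma_q^\ast\}\subseteq\mathbb Z$. (Equivalently, writing each $n\ge1$ in base $q$ as $n=i_1+i_2q+\cdots+i_Nq^{N-1}$ with $i_N\ne0$ and $I=i_1\cdots i_N$, $\lambda_n=\tau^\ast(I)$, $\lambda_0=0$, and $\Lambda(\tau)=\{\lambda_n\}_{n\ge0}$.) The canonical set $\Lambda_{p,q}$ equals $\Lambda(\tau)$ for $\tau(i_1\cdots i_n)=i_n$. *)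

(* Defs.v *)
From mathcomp Require Import all_boot all_order all_algebra.
From mathcomp Require Import all_classical all_reals all_analysis.
Set Implicit Arguments. Unset Strict Implicit. Unset Printing Implicit Defensive.
Import Order.TTheory GRing.Theory Num.Theory.
Local Open Scope classical_set_scope.
Local Open Scope ring_scope.

(* Words over Sigma_q = {0,..,q-1}: nonempty lists of naturals < q,
   written i_1 ... i_n as the list [:: i_1; ...; i_n]. *)
Definition word (q : nat) (w : seq nat) : Prop := (0 < size w)%N /\ all (fun i => (i < q)%N) w.

(* I_{1,k}: truncation of I to length k, padded with zeros if k > |I|. *)
Definition pre (I : seq nat) (k : nat) : seq nat := take k I ++ nseq (k - size I) 0%N.

Definition regular_mapping (p q : nat) (tau : seq nat -> int) : Prop :=
  [/\ (forall w, word q w -> -1 <= tau w <= (p%:Z - 2)),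
      (forall n, (0 < n)%N -> tau (nseq n 0%N) = 0),
      (forall w, word q w -> (q%:Z %| tau w - (last 0%N w)%:Z)%Z) &
      (forall I, word q I -> exists L, forall l, (L <= l)%N -> tau (I ++ nseq l 0%N) = 0)].

(* tau^*(I) = sum_{k>=1} tau(I_{1,k}) p^{k-1}, a finite sum: lam is tau^*(I)
   iff all terms with k > N vanish and lam is the partial sum up to N. *)
Definition tau_star_is (p : nat) (tau : seq nat -> int) (I : seq nat) (lam : int) : Prop :=
  exists N : nat, (forall k, (N < k)%N -> tau (pre I k) = 0) /\
    lam = \sum_(0 <= k < N) tau (pre I k.+1) * (p%:Z) ^+ k.

Definition Lambda_tau (p q : nat) (tau : seq nat -> int) : set int :=
  [set lam | exists I, word q I /\ tau_star_is p tau I lam].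

Definition Lambda_can (p q : nat) : set int :=
  [set lam | exists a : seq nat, word q a /\
     lam = \sum_(i < size a) (nth 0%N a i)%:Z * (p%:Z) ^+ i].

(* #(Lambda ∩ B(x,h)) for Lambda ⊆ Z (always a finite set here). *)
Definition count_ball (R : realType) (L : set int) (x h : R) : R :=
  \sum_(n \in [set n : int | L n /\ `|n%:~R - x| < h]) (1 : R).

(* Upper r-Beurling density:
   limsup_{h->oo} sup_x #(L ∩ B(x,h)) / h^r
   = inf_{H>0} sup_{h >= H, x in R} #(L ∩ B(x,h)) / h^r, in the extended reals. *)
Definition upper_density (R : realType) (r : R) (L : set int) : \bar R :=
  ereal_inf [set ereal_sup [set ((count_ball L xh.1 xh.2) / (xh.2 `^ r))%:E
                                | xh in [set xh : R * R | H <= xh.2]]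
            | H in [set H : R | 0 < H]].

(* Main.v *)
Require Import Defs.
From mathcomp Require Import all_boot all_order all_algebra finmap.
From mathcomp Require Import all_classical all_reals all_analysis.
From mathcomp Require Import zify ring lra.
Import Order.TTheory GRing.Theory Num.Theory.

Section part0.
Set Implicit Arguments. Unset Strict Implicit. Unset Printing Implicit Defensive.


Fixpoint phif (p q fuel N : nat) : nat :=
  match fuel with 0 => 0 | f.+1 => N %% q + p * phif p q f (N %/ q) end.
Definition phi p q N := phif p q N N.

Lemma phif0 p q f : phif p q f 0 = 0.
Proof. by elim: f => //= f; rewrite mod0n div0n => ->; rewrite muln0. Qed.

Lemma phif_eq p q : 1 < q -> forall f f' N, N <= f -> N <= f' -> phif p q f N = phif p q f' N.
Proof.
move=> q1; elim=> [|f IH] [|f'] N /=.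
- by [].
- by rewrite leqn0 => /eqP -> _ /=; rewrite mod0n div0n phif0 muln0.
- by move=> _; rewrite leqn0 => /eqP -> /=; rewrite mod0n div0n phif0 muln0.
move=> Nf Nf'; congr (_ + p * _); apply: IH.
  case: N Nf {Nf'} => [|N] Nf; first by rewrite div0n.
  by rewrite -ltnS (leq_trans _ Nf) // ltn_Pdiv.
case: N Nf' {Nf} => [|N] Nf; first by rewrite div0n.
by rewrite -ltnS (leq_trans _ Nf) // ltn_Pdiv.
Qed.

Lemma phiE p q N : 1 < q -> phi p q N = N %% q + p * phi p q (N %/ q).
Proof.
move=> q1; rewrite /phi; case: N => [|N] /=.
  by rewrite mod0n div0n /= muln0.
congr (_ + p * _); apply: phif_eq => //.
by rewrite -ltnS ltn_Pdiv.
Qed.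

Lemma phi_ge p q N : 1 < q -> q <= p -> N <= phi p q N.
Proof.
move=> q1 qp; elim/ltn_ind: N => N IH.
rewrite phiE //.
case: N IH => [|N] IH; first by [].
have H : N.+1 %/ q <= phi p q (N.+1 %/ q) by apply: IH; rewrite ltn_Pdiv.
have := leq_mul qp H; have := divn_eq N.+1 q; lia.
Qed.

Lemma phi_step p q j N : 1 < q -> j < q -> phi p q (j + q * N) = j + p * phi p q N.
Proof.
move=> q1 jq; rewrite phiE // [j + _]addnC mulnC modnMDl modn_small // divnMDl ?(ltnW q1) //.
by rewrite divn_small // addn0.
Qed.

Definition Dc p q L := count (fun N => phi p q N <= L) (iota 0 L.+1).

Definition Psep (p q : nat) (x y : int) := exists k : nat,
  (p ^ k %| `|x - y|)%N && ~~ (p ^ k * q %| `|x - y|)%N.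

Lemma size_partition (T : eqType) (f : T -> nat) q (s : seq T) :
  all (fun x => f x < q) s -> size s = \sum_(j < q) count (fun x => f x == j) s.
Proof.
elim: s => [|x s IH] /=; first by rewrite big1.
case/andP=> fx /IH ->; rewrite big_split /=.
suff -> : \sum_(j < q) (f x == j :> nat) = 1 by rewrite add1n.
rewrite (bigD1 (Ordinal fx)) //= eqxx big1 ?addn0 // => i /negbTE.
by rewrite eq_sym -(inj_eq val_inj) /= => ->.
Qed.

Lemma seq_min (s : seq nat) : s != [::] -> exists2 c, c \in s & forall x, x \in s -> c <= x.
Proof.
elim: s => [|x s IH] //= _.
case: (eqVneq s [::]) => [->|/IH [c cs cm]].
  by exists x; rewrite ?mem_seq1 // => y; rewrite mem_seq1 => /eqP ->.
case: (leqP x c) => xc.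
  exists x; rewrite ?mem_head // => y; rewrite in_cons => /orP [/eqP -> //|/cm].
  exact: leq_trans.
exists c; first by rewrite in_cons cs orbT.
move=> y; rewrite in_cons => /orP [/eqP ->|/cm //]; exact: ltnW.
Qed.

End part0.

Section part1.
Set Implicit Arguments. Unset Strict Implicit. Unset Printing Implicit Defensive.


Lemma distn_mul (p x y : nat) : `|(p * x)%N - (p * y)%N| = p * `|x - y|.
Proof.
case: (leqP x y) => xy.
  have h : (p * x <= p * y)%N by apply: leq_mul.
  by rewrite (distnEr h) (distnEr xy) mulnBr.
have xy' : (y <= x)%N by apply: ltnW.
have h : (p * y <= p * x)%N by apply: leq_mul.
by rewrite (distnEl h) (distnEl xy') mulnBr.
Qed.

Lemma Psep_div p q (x y : int) : (q %| p)%N -> Psep p q x y -> (q %| `|x - y|)%N -> (p %| `|x - y|)%N.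
Proof.
move=> qp [[|k] /andP [H1 H2]] Hq.
  by move: H2; rewrite expn0 mul1n Hq.
apply: dvdn_trans H1; rewrite expnS; exact: dvdn_mulr.
Qed.

Lemma Psep_shift p q (c x y : nat) : (q %| p)%N -> (0 < p)%N ->
  Psep p q (c + p * x)%N (c + p * y)%N -> Psep p q x y.
Proof.
move=> qp p0 [k /andP [H1 H2]]; move: H1 H2; rewrite distnDl distn_mul.
case: k => [|k].
  rewrite expn0 mul1n => _ /negP; case.
  apply: dvdn_trans qp _; exact: dvdn_mulr.
rewrite expnS dvdn_pmul2l // -mulnA dvdn_pmul2l // => H1 H2.
by exists k; rewrite H1 H2.
Qed.

Lemma main_count p q : (1 < q)%N -> (q <= p)%N -> (q %| p)%N -> forall L (s : seq nat), uniq s ->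
  all (fun x => x <= L)%N s -> {in s &, forall x y : nat, x != y -> Psep p q x y} ->
  (size s <= Dc p q L)%N.
Proof.
move=> q1 qp qdp; have p1 : (1 < p)%N by apply: leq_trans qp.
have p0 : (0 < p)%N by apply: ltnW.
elim/ltn_ind => L IH s us sL sP.
case: L IH sL => [|L] IH sL.
  have sub : {subset s <= [:: 0%N]}.
    by move=> x xs; move/allP: sL => /(_ x xs); rewrite leqn0 mem_seq1.
  by have := uniq_leq_size us sub; rewrite /Dc /=.
have allq : forall (s' : seq nat), all (fun x => x %% q < q)%N s'.
  by move=> s'; apply/allP => x _; rewrite ltn_mod; apply: ltnW.
rewrite (size_partition (allq s)) /Dc -size_filter (size_partition (allq _)).
apply: leq_sum => j _.
rewrite -!size_filter.
set sj := seq.filter _ s.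
case: (eqVneq sj [::]) => [->//|sjn].
have [c0 c0s c0m] := seq_min sjn.
move: (c0s); rewrite mem_filter => /andP [/eqP c0j c0s'].
have jc0 : (j <= c0)%N by rewrite -c0j leq_mod.
have c0L : (c0 <= L.+1)%N by move/allP: sL => /(_ c0 c0s').
have decomp : forall x, x \in sj -> x = (c0 + p * ((x - c0) %/ p))%N.
  move=> x xs; move: (xs); rewrite mem_filter => /andP [/eqP xj xs'].
  have cx : (c0 <= x)%N by apply: c0m.
  have dv : (p %| x - c0)%N.
    case: (eqVneq x c0) => [->|xc]; first by rewrite subnn dvdn0.
    have := Psep_div qdp (sP _ _ xs' c0s' xc).
    rewrite (distnEl cx); apply.
    by rewrite -eqn_mod_dvd // xj c0j.
  by rewrite mulnC divnK // subnKC.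
set M := ((L.+1 - j) %/ p)%N.
have ML : (M < L.+1)%N.
  apply: (@leq_ltn_trans (L.+1 %/ p)).
    by apply: leq_div2r; apply: leq_subr.
  by rewrite ltn_Pdiv.
set t := map (fun x => (x - c0) %/ p)%N sj.
have -> : size sj = size t by rewrite size_map.
apply: (@leq_trans (Dc p q M)).
  apply: IH => //.
  - rewrite map_inj_in_uniq ?filter_uniq // => x y xs ys e.
    by rewrite (decomp x xs) (decomp y ys) e.
  - apply/allP => x' /mapP [x xs ->].
    apply: leq_div2r.
    have : (x <= L.+1)%N by move: xs; rewrite mem_filter => /andP [_ /(allP sL)].
    lia.
  - move=> x' y' /mapP [x xs ->] /mapP [y ys ->] ne.
    have xy : x != y by apply: contraNneq ne => ->.
    have xs' : x \in s by move: xs; rewrite mem_filter => /andP [].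
    have ys' : y \in s by move: ys; rewrite mem_filter => /andP [].
    have := sP _ _ xs' ys' xy.
    rewrite {1}(decomp x xs) {1}(decomp y ys).
    exact: Psep_shift.
rewrite /Dc -size_filter.
set h := fun N => (j + q * N)%N.
have hinj : injective h.
  move=> a b /eqP; rewrite /h eqn_add2l eqn_mul2l => /orP [/eqP q0|/eqP //].
  by move: q1; rewrite q0.
rewrite -(size_map h); apply: uniq_leq_size.
  by rewrite map_inj_uniq // filter_uniq // iota_uniq.
move=> N /mapP [N' N's ->].
have /andP [phM _] : (phi p q N' <= M) && (N' \in iota 0 M.+1) by move: N's; rewrite mem_filter.
have jq : (j < q)%N by apply: ltn_ord.
have hphi : phi p q (h N') = (j + p * phi p q N')%N by rewrite /h phi_step.
have geN : (N' <= phi p q N')%N by apply: phi_ge.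
have Mp : (M * p <= L.+1 - j)%N by apply: leq_trunc_div.
have pM : (p * phi p q N' <= p * M)%N by rewrite leq_mul2l phM orbT.
have qN : (q * N' <= p * phi p q N')%N by apply: leq_mul.
rewrite mem_filter mem_filter mem_iota hphi /h.
rewrite mulnC in Mp.
apply/and4P; split.
- by rewrite addnC mulnC modnMDl modn_small.
- lia.
- by [].
- lia.
Qed.

End part1.

Section part2.
Set Implicit Arguments. Unset Strict Implicit. Unset Printing Implicit Defensive.
Local Open Scope ring_scope.

Lemma chord (R : realType) (t u v l : R) : 1 <= t -> 0 <= u -> 0 <= v -> 0 <= l -> l <= 1 ->
  (l * v + (1 - l) * u) `^ t <= l * v `^ t + (1 - l) * u `^ t.
Proof.
move=> t1 u0 v0 l0 l1.
have := @convex_powR R t t1 (Itv01 l0 l1) v u.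
rewrite !inE /= !in_itv /= !andbT => /(_ v0 u0).
by rewrite !convRE /=.
Qed.

Lemma powR_q (R : realType) (p q : nat) : (1 < q)%N -> (0 < p)%N ->
  (q%:R : R) `^ (ln (p%:R : R) / ln (q%:R)) = p%:R.
Proof.
move=> q1 p0.
have q0 : (0 : R) < q%:R by rewrite ltr0n; apply: ltnW.
have lq : ln (q%:R : R) != 0 by rewrite gt_eqF // ln_gt0 // ltr1n.
rewrite /powR gt_eqF // mulfVK //.
by rewrite lnK // posrE ltr0n.
Qed.

Lemma key_real (R : realType) (p q : nat) (N : nat) : (1 < q)%N -> (q <= p)%N ->
  ((N.+1)%:R : R) `^ (ln (p%:R : R) / ln (q%:R))
    <= 1 + (p%:R - 1) / (q%:R - 1) * (phi p q N)%:R.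
Proof.
move=> q1 qp.
set t := ln _ / _; set F := fun y : R => y `^ t.
set beta := (p%:R - 1) / (q%:R - 1).
have p0 : (0 < p)%N by apply: leq_trans qp; apply: ltnW.
have t1 : 1 <= t.
  rewrite /t ler_pdivlMr ?mul1r; last by rewrite ln_gt0 // ltr1n.
  by rewrite ler_ln ?posrE ?ltr0n ?ler_nat //; apply: ltnW.
have qm1 : (0 : R) < q%:R - 1 by rewrite subr_gt0 ltr1n.
have Fq : F q%:R = p%:R by apply: powR_q.
have F1 : F 1 = 1 by rewrite /F powR1.
elim/ltn_ind: N => N IH.
case: (posnP N) => [->|Npos].
  by rewrite (_ : (0.+1)%:R = 1 :> R) // powR1 /= mulr0 addr0.
set a := (N %% q)%N; set N' := (N %/ q)%N.
have N'N : (N' < N)%N by rewrite ltn_Pdiv.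
have IH' := IH N' N'N.
have phiN : phi p q N = (a + p * phi p q N')%N by rewrite phiE.
have Ndec : N = (a + q * N')%N by rewrite /a /N' {1}(divn_eq N q) addnC mulnC.
have aq : (a < q)%N by rewrite ltn_mod; apply: ltnW.
pose x : R := (N'.+1)%:R.
pose X := q%:R * x.
pose Y := X - (q%:R - 1).
pose lam : R := a%:R / (q%:R - 1).
have lam0 : 0 <= lam by rewrite divr_ge0 // ltW.
have lam1 : lam <= 1.
  rewrite ler_pdivrMr // mul1r lerBrDr natr1 ler_nat; exact: aq.
have E1 : (N.+1)%:R = lam * X + (1 - lam) * Y.
  rewrite /Y /lam /X /x {1}Ndec -addn1 !natrD natrM; field.
  by rewrite gt_eqF.
have x1 : 1 <= x by rewrite /x ler1n.
have q2 : (2 : R) <= q%:R by rewrite ler_nat.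
have X1 : 1 < X by rewrite /X; nra.
have Y1 : 1 <= Y.
  rewrite /Y /X /x -addn1 natrD; nra.
pose mu := (Y - 1) / (X - 1).
have Xm1 : 0 < X - 1 by rewrite subr_gt0.
have mu0 : 0 <= mu by rewrite divr_ge0 // ?subr_ge0 // ltW.
have mu1 : mu <= 1 by rewrite ler_pdivrMr // mul1r /Y; lra.
have E2 : Y = mu * X + (1 - mu) * 1.
  rewrite /mu; field; by rewrite gt_eqF.
have E3 : (1 - mu) * X + (1 - (1 - mu)) * 1 = q%:R.
  rewrite /mu /Y; field; by rewrite gt_eqF.
have X0 : 0 <= X by lra.
have Y0 : 0 <= Y by lra.
have C1 := chord t1 Y0 X0 lam0 lam1; rewrite -E1 in C1.
have C2 := chord t1 (ler01 : (0:R) <= 1) X0 mu0 mu1; rewrite -E2 in C2.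
have mu0' : 0 <= 1 - mu by lra.
have mu1' : 1 - mu <= 1 by lra.
have C3 := chord t1 (ler01 : (0:R) <= 1) X0 mu0' mu1'; rewrite E3 in C3.
rewrite /F in C1.
rewrite powR1 /= in C2 C3.
have Fq' : q%:R `^ t = p%:R by [].
rewrite Fq' in C3.
have C4 : X `^ t = p%:R * x `^ t.
  by rewrite /X powRM ?Fq' // ler0n.
have D1 : Y `^ t + p%:R <= X `^ t + 1 by lra.
have lam0' : 0 <= 1 - lam by lra.
have C5 : (1 - lam) * Y `^ t <= (1 - lam) * (X `^ t + 1 - p%:R).
  by apply: ler_wpM2l => //; lra.
have Iden : lam * (p%:R - 1) = beta * a%:R.
  rewrite /lam /beta; field; by rewrite gt_eqF.
rewrite -/x in IH'.
have IH2 : p%:R * x `^ t <= p%:R * (1 + beta * (phi p q N')%:R).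
  by apply: ler_wpM2l => //; rewrite ler0n.
rewrite phiN natrD natrM.
lra.
Qed.

Lemma Dc_bound (R : realType) (p q L : nat) : (1 < q)%N -> (q <= p)%N ->
  ((Dc p q L)%:R : R) <= (1 + (p%:R - 1) / (q%:R - 1) * L%:R) `^ (ln (q%:R : R) / ln (p%:R)).
Proof.
move=> q1 qp.
set s := ln _ / _; set beta := (p%:R - 1) / (q%:R - 1).
set t := ln (p%:R : R) / ln (q%:R).
have p1 : (1 < p)%N by apply: leq_trans qp.
have lq : (0 : R) < ln q%:R by rewrite ln_gt0 // ltr1n.
have lp : (0 : R) < ln p%:R by rewrite ln_gt0 // ltr1n.
have ts : t * s = 1 by rewrite /t /s; field; rewrite !gt_eqF.
have s0 : 0 <= s by rewrite /s divr_ge0 // ltW.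
have beta0 : 0 <= beta by rewrite /beta divr_ge0 // subr_ge0 ler1n ltnW.
set Xs := (1 + beta * L%:R) `^ s.
have Xs0 : 0 <= Xs by apply: powR_ge0.
rewrite /Dc -size_filter.
apply: (@le_trans _ _ (Num.truncn Xs)%:R); last by rewrite truncn_le.
rewrite ler_nat; apply: (@leq_trans (size (iota 0 (Num.truncn Xs)))); last by rewrite size_iota.
apply: uniq_leq_size; first by rewrite filter_uniq // iota_uniq.
move=> N; rewrite mem_filter => /andP [phL _].
rewrite mem_iota add0n /= truncn_ge_nat //.
have H1 := key_real R N q1 qp; rewrite -/t -/beta in H1.
have H2 : (N.+1)%:R `^ t <= 1 + beta * L%:R :> R.
  apply: (le_trans H1); rewrite lerD2l; apply: ler_wpM2l => //; by rewrite ler_nat.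
have := @ge0_ler_powR R s s0 _ _ _ _ H2.
rewrite -powRrM ts powRr1 ?ler0n // => -> //; rewrite nnegrE ?powR_ge0 //.
rewrite addr_ge0 // mulr_ge0 // ler0n.
Qed.

End part2.

Section part3.
Set Implicit Arguments. Unset Strict Implicit. Unset Printing Implicit Defensive.
Local Open Scope ring_scope.

Lemma pre_mkseq (I : seq nat) k : pre I k = mkseq (fun i => nth 0%N I i) k.
Proof.
apply: (@eq_from_nth _ 0%N).
  rewrite size_mkseq /pre size_cat size_take size_nseq.
  case: (ltnP k (size I)) => h; lia.
move=> i; rewrite /pre size_cat size_take size_nseq => hi.
have ik : (i < k)%N by move: hi; case: (ltnP k (size I)) => h; lia.
rewrite nth_mkseq // nth_cat size_take.
case: (ltnP k (size I)) => h.
  by rewrite ifT ?nth_take.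
case: (ltnP i (size I)) => h2.
  by rewrite nth_take.
rewrite nth_nseq nth_default //; case: ifP => //.
Qed.

Lemma last_pre (I : seq nat) k : last 0%N (pre I k.+1) = nth 0%N I k.
Proof.
rewrite pre_mkseq -nth_last size_mkseq /= nth_mkseq //.
Qed.

Lemma word_pre q (I : seq nat) k : (0 < q)%N -> word q I -> word q (pre I k.+1).
Proof.
move=> q0 [_ /allP wI]; split; rewrite pre_mkseq ?size_mkseq //.
apply/allP => x /mapP [i _ ->].
case: (ltnP i (size I)) => h; first by apply: wI; rewrite mem_nth.
by rewrite nth_default.
Qed.

Lemma tau_star_ext (p : nat) tau (I : seq nat) lam : tau_star_is p tau I lam ->
  exists N, forall M, (N <= M)%N -> lam = \sum_(0 <= k < M) tau (pre I k.+1) * (p%:Z) ^+ k.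
Proof.
move=> [N [H ->]]; exists N => M NM.
rewrite (big_cat_nat _ NM) //= [X in _ = _ + X]big1_seq ?addr0 // => k /andP [_].
rewrite mem_index_iota => /andP [Nk _]; rewrite H ?mul0r //.
Qed.

Lemma pre_eq (I I' : seq nat) k : (forall i, (i < k)%N -> nth 0%N I i = nth 0%N I' i) ->
  pre I k = pre I' k.
Proof.
move=> H; rewrite !pre_mkseq /mkseq; apply/eq_in_map => i.
by rewrite mem_iota add0n => /andP [_ /H].
Qed.

Lemma nth_word q (I : seq nat) k : (0 < q)%N -> word q I -> (nth 0%N I k < q)%N.
Proof.
move=> q0 [_ /allP wI]; case: (ltnP k (size I)) => h; first by apply: wI; rewrite mem_nth.
by rewrite nth_default.
Qed.

Lemma Lambda_Psep p q tau (x y : int) : (1 < q)%N -> (q %| p)%N -> (0 < p)%N ->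
  (forall w, word q w -> (q%:Z %| tau w - (last 0%N w)%:Z)%Z) ->
  Lambda_tau p q tau x -> Lambda_tau p q tau y -> x != y -> Psep p q x y.
Proof.
move=> q1 qp p0 Htau [I [wI sI]] [I' [wI' sI']] xy.
have q0 : (0 < q)%N by apply: ltnW.
have [N HN] := tau_star_ext sI; have [N' HN'] := tau_star_ext sI'.
have [k1 nk] : exists k, ~ (nth 0%N I k == nth 0%N I' k).
  apply/existsNP => H; move/eqP: xy; apply.
  rewrite (HN (maxn N N')) ?leq_maxl // (HN' (maxn N N')) ?leq_maxr //.
  apply: eq_bigr => k _; rewrite (@pre_eq I I') // => i _; exact/eqP.
have ex : exists k, nth 0%N I k != nth 0%N I' k by exists k1; apply/negP.
case: (ex_minnP ex) => k0 hk0 hmin.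
have below : forall i, (i < k0)%N -> nth 0%N I i = nth 0%N I' i.
  move=> i ik; apply/eqP; apply: contraTT ik; rewrite -leqNgt; exact: hmin.
pose M := maxn (maxn N N') k0.+1.
have NM : (N <= M)%N by rewrite /M; lia.
have NM' : (N' <= M)%N by rewrite /M; lia.
have kM : (k0 < M)%N by rewrite /M; lia.
rewrite (HN M NM) (HN' M NM').
pose f k := tau (pre I k.+1); pose g k := tau (pre I' k.+1).
pose Rr := \sum_(k0.+1 <= k < M) (f k - g k) * (p%:Z) ^+ (k - k0.+1).
pose W := f k0 - g k0 + p%:Z * Rr.
have dE : \sum_(0 <= k < M) tau (pre I k.+1) * (p%:Z) ^+ k
        - \sum_(0 <= k < M) tau (pre I' k.+1) * (p%:Z) ^+ k = (p%:Z) ^+ k0 * W.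
  rewrite -sumrB (big_cat_nat (leq0n k0) (ltnW kM)) /= big1_seq; last first.
    move=> k /andP [_]; rewrite mem_index_iota => /andP [_ kk0].
    rewrite (@pre_eq I I') ?subrr // => i ik; apply: below; lia.
  rewrite add0r big_ltn //.
  have -> : \sum_(k0.+1 <= k < M) (tau (pre I k.+1) * (p%:Z) ^+ k - tau (pre I' k.+1) * (p%:Z) ^+ k)
     = (p%:Z) ^+ k0 * (p%:Z * Rr).
    rewrite /Rr !mulr_sumr; apply: eq_big_nat => k /andP [lk _].
    have -> : (p%:Z) ^+ k = (p%:Z) ^+ k0 * p%:Z * (p%:Z) ^+ (k - k0.+1).
      by rewrite -exprSr -exprD subnKC.
    rewrite /f /g; ring.
  rewrite /W /f /g; ring.
exists k0; rewrite dE abszM abszX absz_nat.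
apply/andP; split; first by apply: dvdn_mulr.
rewrite dvdn_pmul2l ?expn_gt0 ?p0 //.
apply/negP => qW.
have qWz : (q%:Z %| W)%Z by rewrite dvdzE absz_nat.
have qpz : (q%:Z %| p%:Z)%Z by rewrite dvdzE !absz_nat.
have qD : (q%:Z %| f k0 - g k0)%Z.
  have -> : f k0 - g k0 = W - p%:Z * Rr by rewrite /W addrK.
  by apply: rpredB => //; apply: dvdz_mulr.
have H1 := Htau _ (word_pre k0 q0 wI); have H2 := Htau _ (word_pre k0 q0 wI').
rewrite !last_pre in H1 H2.
have qL : (q%:Z %| (nth 0%N I k0)%:Z - (nth 0%N I' k0)%:Z)%Z.
  have -> : (nth 0%N I k0)%:Z - (nth 0%N I' k0)%:Z =
     (f k0 - g k0) - (tau (pre I k0.+1) - (nth 0%N I k0)%:Z) + (tau (pre I' k0.+1) - (nth 0%N I' k0)%:Z).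
    by rewrite /f /g; ring.
  by apply: rpredD => //; apply: rpredB.
have a1 := nth_word k0 q0 wI; have a2 := nth_word k0 q0 wI'.
move: qL hk0 a1 a2.
generalize (nth 0%N I k0) (nth 0%N I' k0) => a b.
rewrite dvdzE absz_nat => qL ab a1 a2.
clear -qL ab a1 a2 q0.
case: (leqP a b) => h.
  move: qL; rewrite (distnEr h) => /dvdn_leq; move: ab => /eqP ab; lia.
move: qL; rewrite (distnEl (ltnW h)) => /dvdn_leq; lia.
Qed.

Lemma can_sub p q (x : int) : Lambda_can p q x -> Lambda_tau p q (fun w => (last 0%N w)%:Z) x.
Proof.
move=> [a [wa ->]]; exists a; split => //; exists (size a); split.
  case=> [//|k] ka; rewrite last_pre nth_default //.
rewrite big_mkord; apply: eq_bigr => i _; by rewrite last_pre.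
Qed.

Lemma last_tau_ok q : forall w, word q w -> (q%:Z %| (last 0%N w)%:Z - (last 0%N w)%:Z)%Z.
Proof. by move=> w _; rewrite subrr dvdz0. Qed.

End part3.

Section part4.
Set Implicit Arguments. Unset Strict Implicit. Unset Printing Implicit Defensive.
Local Open Scope classical_set_scope.
Local Open Scope ring_scope.

Lemma ball_finite (R : realType) (L0 : set int) (x h : R) :
  finite_set [set n : int | L0 n /\ `|n%:~R - x| < h].
Proof.
pose K := Num.truncn (`|x| + `|h|).
apply: (@sub_finite_set _ _ [set` [seq (k%:Z - K%:Z) | k <- iota 0 (K + K).+1]]);
  last exact: finite_seq.
move=> n [_ nh]; change (n \in [seq (k%:Z - K%:Z) | k <- iota 0 (K + K).+1]).
have nK : (`|n|%N <= K)%N.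
  rewrite /K truncn_ge_nat ?addr_ge0 // natr_absz intr_norm.
  have : `|n%:~R| <= `|n%:~R - x| + `|x| :> R.
    by rewrite -{1}(subrK x (n%:~R)) ler_normD.
  have : `|n%:~R - x| < `|h| :> R by apply: (lt_le_trans nh); exact: ler_norm.
  lra.
apply/mapP; exists (absz (n + K%:Z)%R).
  rewrite mem_iota /=; lia.
lia.
Qed.

Lemma count_seq (R : realType) (D : set int) : finite_set D ->
  \sum_(n \in D) (1 : R) = (size (fset_set D : seq int))%:R.
Proof.
move=> fD; rewrite fsbig_finite //.
elim: (fset_set D : seq int) => [|a s IH]; first by rewrite big_nil.
by rewrite big_cons IH /= -natr1 addrC.
Qed.

Lemma seq_minz (s : seq int) : s != [::] -> exists2 c, c \in s & forall x, x \in s -> c <= x.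
Proof.
elim: s => [|x s IH] //= _.
case: (eqVneq s [::]) => [->|/IH [c cs cm]].
  by exists x; rewrite ?mem_seq1 // => y; rewrite mem_seq1 => /eqP ->.
case: (lerP x c) => xc.
  exists x; rewrite ?mem_head // => y; rewrite in_cons => /orP [/eqP -> //|/cm].
  exact: le_trans.
exists c; first by rewrite in_cons cs orbT.
move=> y; rewrite in_cons => /orP [/eqP ->|/cm //]; exact: ltW.
Qed.

Lemma count_le (R : realType) p q (L0 : set int) (x h : R) :
  (1 < q)%N -> (q <= p)%N -> (q %| p)%N ->
  (forall a b, L0 a -> L0 b -> a != b -> Psep p q a b) -> 0 <= h ->
  count_ball L0 x h <= (1 + (p%:R - 1) / (q%:R - 1) * (2 * h)) `^ (ln (q%:R : R) / ln (p%:R)).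
Proof.
move=> q1 qp qdp PS h0.
set beta := (p%:R - 1) / (q%:R - 1) : R.
set s := ln (q%:R : R) / ln (p%:R).
have p1 : (1 < p)%N by apply: leq_trans qp.
have s0 : 0 <= s by rewrite /s divr_ge0 // ln_ge0 // ler1n ltnW.
have beta0 : 0 <= beta by rewrite /beta divr_ge0 // subr_ge0 ler1n ltnW.
rewrite /count_ball count_seq; last exact: ball_finite.
set D := [set n : int | _].
have fD : finite_set D by apply: ball_finite.
set S := (fset_set D : seq int).
have uS : uniq S by apply: fset_uniq.
have SD : forall n, n \in S -> D n.
  by move=> n; rewrite /S (in_fset_set fD) inE.
case: (eqVneq S [::]) => [->|Sn]; first by rewrite /= powR_ge0.
have [m mS mmin] := seq_minz Sn.
pose K := Num.truncn (2 * h).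
pose s' := [seq `|n - m|%N | n <- S].
have nm : forall n, n \in S -> (`|n - m|%N)%:Z = n - m.
  by move=> n nS; rewrite gez0_abs // subr_ge0 mmin.
have sz : size S = size s' by rewrite size_map.
have main := @main_count p q q1 qp qdp K s'.
have H1 : (size s' <= Dc p q K)%N.
  apply: main.
  - rewrite map_inj_in_uniq // => a b aS bS e.
    by have := nm a aS; rewrite e nm // => /addIr ->.
  - apply/allP => k /mapP [n nS ->].
    rewrite /K truncn_ge_nat ?mulr_ge0 //.
    have [_ Dn] := SD n nS; have [_ Dm] := SD m mS.
    have -> : (`|n - m|%N)%:R = (n - m)%:~R :> R by rewrite -(nm n nS).
    rewrite rmorphB /=.
    have : `|m%:~R - x| < h :> R by [].
    have : `|n%:~R - x| < h :> R by [].
    rewrite !ltr_norml; lra.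
  - move=> a b /mapP [n nS ->] /mapP [n' n'S ->] ne.
    have nn' : n != n' by apply: contraNneq ne => ->.
    have := PS n n' (SD n nS).1 (SD n' n'S).1 nn'.
    rewrite /Psep (nm n nS) (nm n' n'S).
    by have -> : n - m - (n' - m) = n - n' by ring.
rewrite sz; apply: (le_trans (_ : _ <= (Dc p q K)%:R)); first by rewrite ler_nat.
apply: (le_trans (Dc_bound R K q1 qp)); rewrite -/beta -/s.
have KH : (K%:R : R) <= 2 * h by rewrite /K truncn_le mulr_ge0.
apply: ge0_ler_powR => //; rewrite ?nnegrE.
- by rewrite addr_ge0 // mulr_ge0.
- by rewrite addr_ge0 // mulr_ge0 // mulr_ge0.
- by rewrite lerD2l ler_wpM2l.
Qed.

Lemma dens_le (R : realType) p q (L0 : set int) :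
  (1 < q)%N -> (q < p)%N -> (q %| p)%N ->
  (forall a b, L0 a -> L0 b -> a != b -> Psep p q a b) ->
  (upper_density (ln (q%:R : R) / ln (p%:R)) L0 <=
     ((2 * (p%:R - 1) / (q%:R - 1)) `^ (ln (q%:R : R) / ln (p%:R)))%:E)%E.
Proof.
move=> q1 qp qdp PS.
have qp' : (q <= p)%N by apply: ltnW.
have p1 : (1 < p)%N by apply: ltn_trans qp.
set s := ln (q%:R : R) / ln (p%:R).
set beta := (p%:R - 1) / (q%:R - 1) : R.
have lq : (0 : R) < ln q%:R by rewrite ln_gt0 // ltr1n.
have lp : (0 : R) < ln p%:R by rewrite ln_gt0 // ltr1n.
have s0 : 0 <= s by rewrite /s divr_ge0 // ltW.
have s1 : s <= 1.
  rewrite /s ler_pdivrMr // mul1r ler_ln ?posrE ?ltr0n ?ler_nat //; lia.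
have qm1 : (0 : R) < q%:R - 1 by rewrite subr_gt0 ltr1n.
have beta1 : 1 <= beta by rewrite /beta ler_pdivlMr // mul1r lerB ?ler_nat.
set c := 2 * (p%:R - 1) / (q%:R - 1) : R.
have cE : c = 2 * beta by rewrite /c /beta mulrA.
have c1 : 1 <= c by rewrite cE; lra.
have c0 : 0 < c by lra.
have cs0 : 0 < c `^ s by apply: powR_gt0.
apply/lee_addgt0Pr => e e0.
pose H := c `^ s / (c * e) + 1.
have H0 : 0 < H.
  have : 0 <= c `^ s / (c * e) by apply: divr_ge0; [exact: ltW | apply: mulr_ge0; exact: ltW].
  rewrite /H; lra.
apply: ge_ereal_inf; eexists; first by exists H.
apply: ge_ereal_sup => _ [[xx hh] /= Hh <-]; rewrite lee_fin.
have hh0 : 0 < hh by apply: lt_le_trans Hh.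
have hs0 : 0 < hh `^ s by apply: powR_gt0.
have cnt := @count_le R p q L0 xx hh q1 qp' qdp PS (ltW hh0); rewrite -/beta -/s in cnt.
rewrite ler_pdivrMr //.
apply: (le_trans cnt).
have E1 : 1 + beta * (2 * hh) = hh * (c + hh^-1).
  by rewrite cE mulrDr mulfV ?gt_eqF //; ring.
rewrite E1.
have -> : (hh * (c + hh^-1)) `^ s = hh `^ s * (c + hh^-1) `^ s.
  by apply: powRM; [exact: ltW | apply: addr_ge0; [exact: ltW| rewrite invr_ge0; exact: ltW]].
rewrite [X in _ <= X]mulrC; apply: ler_wpM2l; first exact: ltW.
have HH : hh^-1 <= H^-1 by rewrite lef_pV2 // posrE.
apply: (@le_trans _ _ ((c + H^-1) `^ s)).
  apply: ge0_ler_powR => //; rewrite ?nnegrE ?lerD2l //.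
    by apply: addr_ge0; [exact: ltW| rewrite invr_ge0; exact: ltW].
  by apply: addr_ge0; [exact: ltW| rewrite invr_ge0; exact: ltW].
have E2 : c + H^-1 = c * (1 + (c * H)^-1).
  by rewrite mulrDr mulr1 invfM mulrA mulfV ?gt_eqF // mul1r.
have b1 : 1 <= 1 + (c * H)^-1.
  rewrite lerDl invr_ge0; apply: mulr_ge0; exact: ltW.
rewrite E2.
have -> : (c * (1 + (c * H)^-1)) `^ s = c `^ s * (1 + (c * H)^-1) `^ s.
  apply: powRM; [exact: ltW | apply: le_trans b1; exact: ler01].
apply: (@le_trans _ _ (c `^ s * (1 + (c * H)^-1))).
  by apply: ler_wpM2l; [exact: ltW | exact: ler1_powR].
rewrite mulrDr mulr1 lerD2l.
rewrite ler_pdivrMr; last exact: mulr_gt0.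
have E3 : e * (c * H) = c `^ s + e * c.
  by rewrite /H; field; rewrite !gt_eqF.
have ec : 0 < e * c by apply: mulr_gt0.
rewrite E3; lra.
Qed.

End part4.

Section part5.
Set Implicit Arguments. Unset Strict Implicit. Unset Printing Implicit Defensive.
Local Open Scope classical_set_scope.
Local Open Scope ring_scope.

Lemma phi0 p q M : (1 < q)%N -> (q <= p)%N -> phi p q M = 0%N -> M = 0%N.
Proof. move=> q1 qp h; have := phi_ge M q1 qp; rewrite h; lia. Qed.

Lemma phi_inj p q : (1 < q)%N -> (q <= p)%N -> injective (phi p q).
Proof.
move=> q1 qp N; elim/ltn_ind: N => N IH M e.
case: (posnP N) => [N0|Npos].
  by subst N; apply/esym/(phi0 q1 qp); rewrite -e.
have modE : forall K, (phi p q K %% p = K %% q)%N.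
  move=> K; rewrite phiE // [(_ %% q + _)%N]addnC [(p * _)%N]mulnC modnMDl modn_small //.
  apply: leq_trans qp; rewrite ltn_mod; lia.
have divE : forall K, (phi p q K %/ p = phi p q (K %/ q))%N.
  move=> K; rewrite phiE // [(_ %% q + _)%N]addnC [(p * _)%N]mulnC divnMDl; last lia.
  rewrite (@divn_small (K %% q)) ?addn0 //.
  apply: leq_trans qp; rewrite ltn_mod; lia.
have e1 : (N %% q = M %% q)%N by rewrite -!modE e.
have e2 : (N %/ q = M %/ q)%N.
  apply: IH; first by rewrite ltn_Pdiv.
  by rewrite -!divE e.
by rewrite (divn_eq N q) (divn_eq M q) e1 e2.
Qed.

Lemma phi_sum p q n N : (1 < q)%N -> (N < q ^ n)%N ->
  phi p q N = (\sum_(i < n) ((N %/ q ^ i) %% q) * p ^ i)%N.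
Proof.
move=> q1; elim: n N => [|n IH] N hN.
  by move: hN; rewrite expn0 ltnS leqn0 => /eqP ->; rewrite big_ord0.
rewrite phiE // big_ord_recl /= expn0 divn1 muln1; congr (_ + _)%N.
rewrite IH; last by rewrite ltn_divLR ?expn_gt0 ?(ltnW q1) // mulnC -expnS.
rewrite big_distrr /=; apply: eq_bigr => i _.
by rewrite /bump /= add1n !expnS divnMA mulnCA.
Qed.

Lemma phi_bound (R : realDomainType) p q n N : (1 < q)%N -> (q <= p)%N -> (N < q ^ n)%N ->
  ((p%:R - 1) * (phi p q N)%:R <= (q%:R - 1) * ((p ^ n)%:R - 1) :> R).
Proof.
move=> q1 qp; elim: n N => [|n IH] N hN.
  by move: hN; rewrite expn0 ltnS leqn0 => /eqP ->; rewrite expn0 subrr mulr0.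
have hN' : (N %/ q < q ^ n)%N by rewrite ltn_divLR ?expn_gt0 ?(ltnW q1) // mulnC -expnS.
have IH' := IH _ hN'.
rewrite phiE // expnS.
have aq : (N %% q < q)%N by rewrite ltn_mod; lia.
move: IH'; set f := phi p q (N %/ q); set a := (N %% q)%N; set P := (p ^ n)%N => IH'.
rewrite natrD !natrM.
have p1 : (1 <= p%:R :> R) by rewrite ler1n; lia.
have a1 : (a%:R <= q%:R - 1 :> R) by rewrite lerBrDr natr1 ler_nat.
have a0 : (0 <= a%:R :> R) by rewrite ler0n.
nra.
Qed.

Lemma phi_can p q n N : (1 < q)%N -> (0 < n)%N -> (N < q ^ n)%N -> Lambda_can p q (phi p q N)%:Z.
Proof.
move=> q1 n0 hN.
exists [seq (N %/ q ^ i) %% q | i <- iota 0 n]%N; split.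
  split; first by rewrite size_map size_iota.
  apply/allP => x /mapP [i _ ->]; rewrite ltn_mod; lia.
rewrite (phi_sum p q1 hN) size_map size_iota.
rewrite (big_morph Posz PoszD (erefl (Posz 0))).
apply: eq_bigr => i _.
rewrite PoszM (nth_map 0%N) ?size_iota // nth_iota // add0n.
by rewrite -[Posz (p ^ i)]natz natrX natz.
Qed.

Lemma dens_ge (R : realType) p q :
  (1 < q)%N -> (q < p)%N -> (q %| p)%N ->
  (((2 * (p%:R - 1) / (q%:R - 1)) `^ (ln (q%:R : R) / ln (p%:R)))%:E <=
    upper_density (ln (q%:R : R) / ln (p%:R)) (Lambda_can p q))%E.
Proof.
move=> q1 qp qdp.
have qp' : (q <= p)%N by apply: ltnW.
have p1 : (1 < p)%N by apply: ltn_trans qp.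
set s := ln (q%:R : R) / ln (p%:R).
set c := 2 * (p%:R - 1) / (q%:R - 1) : R.
have qm1 : (0 : R) < q%:R - 1 by rewrite subr_gt0 ltr1n.
have pm1 : (0 : R) < p%:R - 1 by rewrite subr_gt0 ltr1n.
have c0 : 0 < c by rewrite /c; apply: divr_gt0 => //; apply: mulr_gt0.
apply: le_ereal_inf_tmp => _ [H H0 <-].
apply: le_ereal_sup_tmp.
pose n := (Num.truncn (c * H)).+1.
pose P : R := (p ^ n)%:R.
pose hh := P / c.
pose lam := (q%:R - 1) * (P - 1) / (p%:R - 1).
pose xx := lam / 2.
pose D := [set m : int | Lambda_can p q m /\ `|m%:~R - xx| < hh].
have nP : (n < p ^ n)%N by apply: ltn_expl.
have cHn : c * H < n%:R by rewrite /n truncnS_gt.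
have Pn : (n%:R : R) <= P by rewrite /P ler_nat ltnW.
have hh0 : 0 < hh by rewrite /hh divr_gt0 // /P ltr0n expn_gt0; lia.
exists ((count_ball (Lambda_can p q) xx hh / hh `^ s)%:E).
  exists (xx, hh) => //=.
  rewrite /hh ler_pdivlMr // mulrC; lra.
rewrite lee_fin.
have hs0 : 0 < hh `^ s by apply: powR_gt0.
rewrite ler_pdivlMr //.
have E1 : c `^ s * hh `^ s = (q ^ n)%:R.
  rewrite -powRM ?ltW // /hh mulrCA mulfV ?gt_eqF // mulr1 /P natrX.
  rewrite -powR_mulrn ?ler0n // powRAC /s powR_q ?powR_mulrn ?natrX //; lia.
rewrite E1 /count_ball count_seq; last exact: ball_finite.
rewrite ler_nat -/D.
have fD : finite_set D by apply: ball_finite.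
rewrite -(size_iota 0 (q ^ n)) -(size_map (fun N => Posz (phi p q N))).
apply: uniq_leq_size.
  rewrite map_inj_uniq ?iota_uniq // => a b [] /(phi_inj q1 qp') //.
move=> m /mapP [N]; rewrite mem_iota add0n => /andP [_ hN] ->.
rewrite (in_fset_set fD) inE; split.
  by apply: (@phi_can p q n N q1 _ hN).
have B := @phi_bound R p q n N q1 qp' hN.
have phi0 : (0 : R) <= (phi p q N)%:R by rewrite ler0n.
have -> : ((phi p q N)%:Z)%:~R = (phi p q N)%:R :> R by [].
have lamE : lam * (p%:R - 1) = (q%:R - 1) * (P - 1) by rewrite /lam mulfVK ?gt_eqF.
have hhE : hh * (2 * (p%:R - 1)) = (q%:R - 1) * P.
  by rewrite /hh /c; field; rewrite !gt_eqF.
rewrite -/P in B.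
have phlam : (phi p q N)%:R <= lam.
  rewrite -(ler_pM2r pm1) lamE mulrC; exact: B.
have lamhh : lam / 2 < hh.
  rewrite ltr_pdivrMr // -(ltr_pM2r pm1) lamE.
  have : hh * 2 * (p%:R - 1) = (q%:R - 1) * P by rewrite -mulrA.
  lra.
rewrite /xx ltr_norml; apply/andP; split; lra.
Qed.

End part5.

Local Open Scope classical_set_scope.
Local Open Scope ring_scope.

Theorem theorem1p5 (R : realType) (p q : nat) :
  (2 <= q)%N -> (q < p)%N -> (q %| p)%N ->
  let s : R := ln (q%:R) / ln (p%:R) in
  let bound : R := (2 * (p%:R - 1) / (q%:R - 1)) `^ s in
  (forall tau : seq nat -> int, regular_mapping p q tau ->
     (upper_density s (Lambda_tau p q tau) <= bound%:E)%E) /\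
  upper_density s (Lambda_can p q) = bound%:E.
Proof.
move=> q1 qp qdp s bound.
have p0 : (0 < p)%N by apply: leq_trans qp.
split.
  move=> tau [_ _ Hii _].
  apply: dens_le => // a b La Lb ab.
  exact: (Lambda_Psep q1 qdp p0 Hii La Lb ab).
apply/le_anti/andP; split.
  apply: dens_le => // a b La Lb ab.
  exact: (Lambda_Psep q1 qdp p0 (@last_tau_ok q) (can_sub La) (can_sub Lb) ab).
exact: dens_ge.
Qed.
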